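(* Let $C\subseteq\mathbb{F}_2^n$ be a binary linear code with $\mathbf{1}_n\in C$, whose dual $C^\perp$ has minimum distance $d^\perp$, and let $t$ be a positive integer such that $$d^\perp-t=\#\{u \mid C_u\neq\emptyset,\ 0<u\le n-t\}=1.$$ Then the support design $D_{n/2}$ of $C$ for weight $n/2$ is a $1$-design or a $3$-design; more precisely, the largest integer $s\ge1$ such that $D_{n/2}$ is an $s$-design satisfies $s\in\{1,3\}$.
   Context: $\mathbf{1}_n$ is the all-ones vector; $C^\perp$ is the dual code with respect to the standard inner product; $d^\perp$ is the minimum nonzero weight of $C^\perp$; $C_u=\{c\in C:\mathrm{wt}(c)=u\}$ (Hamming weight). In this situation the nonzero weights of $C$ are exactly $n/2$ and $n$, with $n$ even. An $s$-design on a point set $X$ is a collection of blocks ($k$-subsets of $X$) such that every $s$-subset of $X$ lies in the same number of blocks. The support design $D_{n/2}$ has points $\{1,\dots,n\}$ and blocks the supports $\{i:c_i\neq0\}$ of codewords $c\in C$ of weight $n/2$. *)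

(* Defs.v *)
From mathcomp Require Import all_boot all_order all_algebra.
Set Implicit Arguments. Unset Strict Implicit. Unset Printing Implicit Defensive.
Import GRing.Theory.
Local Open Scope ring_scope.

Definition word n := 'rV['F_2]_n.

(* linear over F_2: contains 0 and closed under addition (scalars are 0,1) *)
Definition linear_code n (C : {set word n}) : bool :=
  (0 \in C) && [forall x in C, forall y in C, x + y \in C].

Definition all_ones n : word n := \row_(i < n) 1.

Definition supp n (c : word n) : {set 'I_n} := [set i | c 0 i != 0].
Definition wt n (c : word n) : nat := #|supp c|.

Definition dotp n (x y : word n) : 'F_2 := \sum_(i < n) x 0 i * y 0 i.

Definition dual n (C : {set word n}) : {set word n} :=
  [set y | [forall x in C, dotp x y == 0]].

Definition min_dist n (D : {set word n}) (d : nat) : Prop :=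
  (exists2 c, c \in D & (c != 0) && (wt c == d)) /\
  (forall c, c \in D -> c != 0 -> (d <= wt c)%N).

Definition C_u n (C : {set word n}) (u : nat) : {set word n} :=
  [set c in C | wt c == u].

Definition support_blocks n (C : {set word n}) (k : nat) : {set {set 'I_n}} :=
  [set supp c | c in C_u C k].

Definition is_design n (B : {set {set 'I_n}}) (k s : nat) : Prop :=
  (s <= k)%N /\
  exists lam : nat, forall S : {set 'I_n}, #|S| = s ->
    #|[set b in B | S \subset b]| = lam.

(* Main.v *)
Require Import Defs.
From mathcomp Require Import all_boot all_order all_algebra.
From mathcomp Require Import zify.
Set Implicit Arguments. Unset Strict Implicit. Unset Printing Implicit Defensive.
Import GRing.Theory.
Local Open Scope ring_scope.

Lemma f2_cases (x : 'F_2) : x = 0 \/ x = 1.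
Proof. move: x => [[|[|m]] Hm]. left; exact/val_inj. right; exact/val_inj. by move: Hm; rewrite (pdiv_id (isT : prime 2)). Qed.
Lemma f2_11 : (1 + 1 : 'F_2) = 0. Proof. exact/val_inj. Qed.
Lemma f2_add_self (x : 'F_2) : x + x = 0.
Proof. case: (f2_cases x) => ->; [by rewrite addr0 | exact f2_11]. Qed.
Lemma f2_neq0 (x : 'F_2) : (x != 0) = (x == 1).
Proof. by case: (f2_cases x) => ->. Qed.
Lemma f2_10 : (1 : 'F_2) != 0. Proof. by []. Qed.
Lemma f2_nat (m : nat) : (m%:R : 'F_2) = (odd m)%:R.
Proof. elim: m => // m IH. rewrite -[m.+1]addn1 natrD IH /= oddD /=. case: (odd m) => /=; [exact: f2_11 | by rewrite add0r]. Qed.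

Section Words.
Variable n : nat.
Implicit Types (c x y : word n) (A S : {set 'I_n}).

Definition ind A : word n := \row_i (i \in A)%:R.

Lemma entry_supp c i : c 0 i = (i \in supp c)%:R.
Proof. rewrite /supp inE f2_neq0. by case: (f2_cases (c 0 i)) => ->. Qed.

Lemma supp_ind A : supp (ind A) = A.
Proof. apply/setP => i. rewrite /supp /ind !inE mxE. by case: (i \in A). Qed.

Lemma word_supp c : c = ind (supp c).
Proof. apply/rowP => i. by rewrite /ind mxE -entry_supp. Qed.

Lemma supp_inj c1 c2 : supp c1 = supp c2 -> c1 = c2.
Proof. by move=> h; rewrite (word_supp c1) (word_supp c2) h. Qed.

Lemma supp0 : supp (0 : word n) = set0.
Proof. apply/setP => i. by rewrite /supp !inE mxE. Qed.

Lemma supp1 : supp (all_ones n) = setT.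
Proof. apply/setP => i. by rewrite /supp !inE mxE. Qed.

Lemma supp_add c1 c2 i : (i \in supp (c1 + c2)) = (i \in supp c1) (+) (i \in supp c2).
Proof.
rewrite /supp !inE mxE !f2_neq0.
by case: (f2_cases (c1 0 i)) => ->; case: (f2_cases (c2 0 i)) => ->; rewrite ?addr0 ?add0r ?f2_11.
Qed.

Lemma f2_add_self_w c : c + c = 0.
Proof. apply/rowP => i; rewrite !mxE; exact: f2_add_self. Qed.

Lemma wt0 c : (wt c == 0)%N = (c == 0).
Proof.
rewrite /wt cards_eq0. apply/eqP/eqP => [h|->]; last exact: supp0.
by apply: supp_inj; rewrite h supp0.
Qed.

Lemma dotp_ind c A : dotp c (ind A) = \sum_(i in A) c 0 i.
Proof.
rewrite /dotp (bigID (fun i => i \in A)) /= [X in _ + X]big1 ?addr0.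
  by apply: eq_bigr => i iA; rewrite /ind mxE iA mulr1.
by move=> i /negbTE iA; rewrite /ind mxE iA mulr0.
Qed.

Lemma sum_f2_card A : \sum_(i in A) (1 : 'F_2) = #|A|%:R.
Proof. by rewrite sumr_const. Qed.

Lemma dotpC x y : dotp x y = dotp y x.
Proof. apply: eq_bigr => i _; exact: mulrC. Qed.

Lemma dotpDr x y1 y2 : dotp x (y1 + y2) = dotp x y1 + dotp x y2.
Proof. rewrite /dotp -big_split /=. apply: eq_bigr => i _. by rewrite mxE mulrDr. Qed.

Lemma dotpDl x1 x2 y : dotp (x1 + x2) y = dotp x1 y + dotp x2 y.
Proof. rewrite /dotp -big_split /=. apply: eq_bigr => i _. by rewrite mxE mulrDl. Qed.


Section Code.
Variable C : {set word n}.
Hypothesis hC : linear_code C.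

Lemma lc0 : (0 : word n) \in C.
Proof. by case/andP: hC. Qed.

Lemma lcD x y : x \in C -> y \in C -> x + y \in C.
Proof. case/andP: hC => _ /forall_inP h xC yC. exact: (forall_inP (h x xC) y yC). Qed.

Lemma lc_sum (I : finType) (P : pred I) (F : I -> word n) :
  (forall i, P i -> F i \in C) -> \sum_(i | P i) F i \in C.
Proof. move=> h. apply: (big_ind (fun v => v \in C)); [exact: lc0 | exact: lcD | exact: h]. Qed.

Lemma lcZ (a : 'F_2) x : x \in C -> a *: x \in C.
Proof. case: (f2_cases a) => -> xC; by rewrite ?scale0r ?scale1r ?lc0. Qed.

Lemma dualP y : reflect (forall x, x \in C -> dotp x y = 0) (y \in dual C).
Proof.
rewrite /dual inE. apply: (iffP forall_inP) => h x xC; first exact/eqP/h. by rewrite h.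
Qed.

Lemma dualD y1 y2 : y1 \in dual C -> y2 \in dual C -> y1 + y2 \in dual C.
Proof. move=> /dualP h1 /dualP h2. apply/dualP => x xC. by rewrite dotpDr h1 ?h2 ?addr0. Qed.

Lemma half (D : {set word n}) c0 (x : 'I_n) (a : 'F_2) :
  (forall c, c \in D -> c + c0 \in D) -> c0 0 x = 1 ->
  #|D| = (2 * #|[set c in D | c 0%R x == a]|)%N.
Proof.
move=> hD h0.
set P := [set c : word n | c 0%R x == a].
have -> : [set c in D | c 0%R x == a] = D :&: P by apply/setP => c; rewrite !inE.
rewrite -(cardsID P D) mul2n -addnn. congr (_ + _)%N.
have -> : D :\: P = (fun c => c + c0) @: (D :&: P).
  apply/setP => c; rewrite !inE; apply/andP/imsetP.
    case=> cP cD. exists (c + c0); last by rewrite -addrA (f2_add_self_w c0) addr0.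
    rewrite !inE hD // mxE h0. move: cP.
    case: (f2_cases (c 0 x)) => ->; case: (f2_cases a) => ->; by rewrite ?eqxx ?add0r ?f2_11.
  case=> d; rewrite !inE => /andP[dD /eqP dx] ->. split; last by apply: hD.
  rewrite mxE dx h0. case: (f2_cases a) => ->; by rewrite ?add0r ?f2_11.
rewrite card_imset //. exact: addIr.
Qed.

Definition F S (p : 'I_n -> 'F_2) := [set c in C | [forall i in S, c 0%R i == p i]].

Lemma construct S (x : 'I_n) (ci : 'I_n -> word n) :
  x \notin S ->
  (forall i, ci i \in C) ->
  (forall i j, j \in S -> (ci i) 0 j = (i == j)%:R) ->
  (forall c, c \in C -> (forall j, j \in S -> c 0 j = 0) -> c 0 x = 0) ->
  exists y, [/\ y \in dual C, y 0 x = 1 & supp y \subset x |: S].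
Proof.
move=> xS ciC ciE hx.
exists (\row_j (if j == x then 1 else if j \in S then (ci j) 0 x else 0)); split.
- apply/dualP => c cC.
  set c' := c + \sum_(i in S) c 0 i *: ci i.
  have c'C : c' \in C by apply: lcD => //; apply: lc_sum => i _; exact: lcZ.
  have c'S : forall j, j \in S -> c' 0 j = 0.
    move=> j jS. rewrite /c' mxE summxE (bigD1 j) //= big1 ?addr0.
      by rewrite mxE ciE // eqxx mulr1 f2_add_self.
    move=> i /andP[_ ij]. by rewrite mxE ciE // (negbTE ij) mulr0.
  have hx0 := hx _ c'C c'S. move: hx0; rewrite /c' mxE summxE => hx0.
  apply: eq_trans _ hx0.
  rewrite /dotp (bigD1 x) //= mxE eqxx mulr1. congr (_ + _).
  rewrite big_mkcond [RHS]big_mkcond /=. apply: eq_bigr => j _.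
  rewrite !mxE. case: eqP => [->|_] /=; first by rewrite (negbTE xS).
  by case: (j \in S); rewrite ?mulr0.
- by rewrite mxE eqxx.
- apply/subsetP => j; rewrite /supp inE mxE. case jx: (j == x); first by rewrite !inE jx.
  case jS: (j \in S); last by rewrite eqxx. by rewrite !inE jS orbT.
Qed.


Lemma fiber m : forall S, #|S| = m ->
  (forall y, y \in dual C -> supp y \subset S -> y = 0) ->
  forall p, (#|F S p| * 2 ^ m)%N = #|C|.
Proof.
have C0 : (0 < #|C|)%N by apply/card_gt0P; exists 0; exact: lc0.
elim: m => [|m IH] S hS hy p.
  have -> : S = set0 by apply/eqP; rewrite -cards_eq0 hS.
  rewrite expn0 muln1. apply: eq_card => c; rewrite !inE.
  case: (c \in C) => //=. by apply/forall_inP => i; rewrite inE.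
have [x xS] : exists x : 'I_n, x \in S by apply/set0Pn; rewrite -card_gt0 hS.
set S' := S :\ x.
have hS' : #|S'| = m by move: hS; rewrite (cardsD1 x S) xS add1n => -[].
have hy' : forall y, y \in dual C -> supp y \subset S' -> y = 0.
  by move=> y yd ys; apply: hy yd (subset_trans ys (subsetDl _ _)).
have IH' := IH S' hS' hy'.
pose delta (i : 'I_n) := fun j : 'I_n => ((i == j)%:R : 'F_2).
pose ci i := odflt 0 [pick c in F S' (delta i)].
have ciP : forall i, ci i \in F S' (delta i).
  move=> i; rewrite /ci; case: pickP => //= h.
  have h0 : #|F S' (delta i)| = 0%N by apply: eq_card0.
  by move: C0; rewrite -(IH' (delta i)) h0.
have ciC : forall i, ci i \in C by move=> i; have := ciP i; rewrite inE => /andP[].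
have ciE : forall i j, j \in S' -> ci i 0 j = (i == j)%:R.
  by move=> i j jS; have := ciP i; rewrite inE => /andP[_ /forall_inP h]; apply/eqP/h.
have [c0 [c0C c0S c0x]] : exists c0, [/\ c0 \in C, forall j, j \in S' -> c0 0 j = 0 & c0 0 x = 1].
  case: (boolP [exists c in C, [forall j in S', c 0%R j == 0] && (c 0%R x == 1)]).
    move=> /exists_inP [c cC /andP[/forall_inP h /eqP h1]].
    by exists c; split => // j jS; apply/eqP/h.
  move=> hn. have xS' : x \notin S' by rewrite !inE eqxx.
  have [y [yd yx ys]] : exists y, [/\ y \in dual C, y 0 x = 1 & supp y \subset x |: S'].
    apply: construct xS' ciC ciE _.
    move=> c cC hc. case: (f2_cases (c 0 x)) => // h1. exfalso; move/negP: hn; apply.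
    apply/exists_inP; exists c => //; rewrite h1 eqxx andbT.
    by apply/forall_inP => j jS; rewrite hc.
  have y0 : y = 0 by apply: (hy y yd); apply: (subset_trans ys); rewrite setD1K.
  by move: yx; rewrite y0 mxE => /eqP; rewrite eq_sym (negbTE f2_10).
have eqF : [set c in F S' p | c 0%R x == p x] = F S p.
  apply/setP => c; rewrite !inE. apply/idP/idP.
    case/andP => /andP[cC /forall_inP h] hx. rewrite cC /=.
    apply/forall_inP => i iS. case: (eqVneq i x) => [->//|ix]. by apply: h; rewrite !inE ix.
  case/andP => cC /forall_inP h. rewrite cC /= h // andbT.
  by apply/forall_inP => i; rewrite !inE => /andP[_ iS]; apply: h.
have hD : forall c, c \in F S' p -> c + c0 \in F S' p.
  move=> c; rewrite !inE => /andP[cC /forall_inP h]. rewrite lcD //=.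
  apply/forall_inP => i iS. rewrite mxE c0S // addr0. exact: h.
have := @half (F S' p) c0 x (p x) hD c0x.
rewrite eqF => hh. by rewrite expnS mulnA [(_ * 2)%N]mulnC -hh IH'.
Qed.

End Code.
End Words.
Lemma sum_bool_card (T : finType) (A : {pred T}) (P : pred T) :
  (\sum_(x in A) (P x : nat) = #|[set x in A | P x]|)%N.
Proof.
rewrite -sum1_card big_mkcond [RHS]big_mkcond /=. apply: eq_bigr => x _.
by rewrite !inE; case: (x \in A); case: (P x).
Qed.

Section Design.
Variable n : nat.
Variable B : {set {set 'I_n}}.
Variable k : nat.
Hypothesis hB : forall b, b \in B -> #|b| = k.

Definition cnt (S : {set 'I_n}) := #|[set b in B | S \subset b]|.

Lemma double_count (S : {set 'I_n}) :
  (cnt S * (k - #|S|) = \sum_(x in ~: S) cnt (x |: S))%N.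
Proof.
have e1 : forall b, b \in [set b in B | S \subset b] -> (k - #|S| = \sum_(x in ~: S) (x \in b))%N.
  move=> b; rewrite inE => /andP[bB Sb]. rewrite -(hB bB).
  have {1}-> : S = b :&: S by move/setIidPr: Sb.
  rewrite -cardsD sum_bool_card. apply: eq_card => x. by rewrite !inE andbC.
rewrite /cnt -sum_nat_const (eq_bigr _ e1) exchange_big /=.
apply: eq_bigr => x _. rewrite sum_bool_card. apply: eq_card => b.
rewrite !inE subUset sub1set. by case: (b \in B); case: (x \in b); case: (S \subset b).
Qed.

Lemma design_down s : is_design B k s.+1 -> is_design B k s.
Proof.
case=> hs [lam hl]. split; first exact: ltnW.
exists (((n - s) * lam) %/ (k - s))%N => S hS.
have hks : (0 < k - s)%N by rewrite subn_gt0.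
rewrite /is_design.
have := double_count S. rewrite hS.
rewrite (eq_bigr (fun _ => lam)); last first.
  move=> x; rewrite inE => xS. apply: hl. by rewrite cardsU1 xS hS.
rewrite sum_nat_const cardsCs card_ord setCK hS => <-. by rewrite mulnK.
Qed.

Lemma design_downn s m : (s <= m)%N -> is_design B k m -> is_design B k s.
Proof.
move=> hsm; elim: m hsm => [|m IH]; first by rewrite leqn0 => /eqP->.
rewrite leq_eqVlt => /orP[/eqP->//|]; rewrite ltnS => hs hd.
exact: IH hs (design_down hd).
Qed.

End Design.

Lemma half_of (a m : nat) : a.*2 = m -> m./2 = a.
Proof. by move=> <-; exact: doubleK. Qed.

Section Finish.
Local Open Scope ring_scope.
Variable n : nat.
Variable C : {set word n}.
Hypothesis hC : linear_code C.
Hypothesis h1 : all_ones n \in C.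
Hypothesis hW : forall c, c \in C -> c != 0 -> c != all_ones n -> (wt c).*2 = n.
Hypothesis hn : (0 < n)%N.

Definition one := fun _ : 'I_n => (1 : 'F_2).

Lemma blocks_size b : b \in support_blocks C n./2 -> #|b| = n./2.
Proof. by case/imsetP => c; rewrite inE => /andP[_ /eqP <-] ->. Qed.

Lemma forall_one (c : word n) (S : {set 'I_n}) : [forall i in S, c 0%R i == 1] = (S \subset supp c).
Proof.
apply/forall_inP/subsetP => h i iS; first by rewrite inE f2_neq0 h.
by rewrite -f2_neq0; have := h i iS; rewrite inE.
Qed.

Lemma cnt_F (S : {set 'I_n}) : S != set0 -> (cnt (support_blocks C n./2) S).+1 = #|F C S one|.
Proof.
move=> Sn0.
have ea : [set b in support_blocks C n./2 | S \subset b] =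
          (@supp n) @: [set c in C_u C n./2 | S \subset supp c].
  apply/setP => b; rewrite inE; apply/andP/imsetP.
    case=> /imsetP [c cC ->] Sb. by exists c => //; rewrite inE cC.
  case=> c; rewrite inE => /andP[cC Sc] ->. split => //. exact: imset_f.
have hlt : n./2 != n by rewrite neq_ltn ltn_half_double -addnn -{1}[n]addn0 ltn_add2l hn.
have eb : F C S one = all_ones n |: [set c in C_u C n./2 | S \subset supp c].
  apply/setP => c; rewrite /F !inE forall_one.
  case: (eqVneq c (all_ones n)) => [->|c1] /=; first by rewrite h1 supp1 subsetT.
  case cC: (c \in C) => //=. case Sc: (S \subset supp c); rewrite ?andbF //= andbT.
  have c0 : c != 0.
    apply/eqP => c0; move: Sn0 Sc; rewrite c0 supp0 subset0 => /negbTE -> //.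
  by rewrite (half_of (hW cC c0 c1)) eqxx.
rewrite /cnt ea card_imset; last exact: supp_inj.
rewrite eb cardsU1 inE.
rewrite !inE /wt supp1 cardsT card_ord eq_sym (negbTE hlt) !andbF. by rewrite add1n.
Qed.

Lemma finish s : (0 < s)%N -> (s <= n./2)%N ->
  (forall S : {set 'I_n}, #|S| = s -> (#|F C S one| * 2 ^ s)%N = #|C|) ->
  (exists S1 S2 : {set 'I_n}, [/\ #|S1| = s.+1, #|S2| = s.+1 & #|F C S1 one| != #|F C S2 one|]) ->
  is_design (support_blocks C n./2) n./2 s /\
  (forall s', (s < s')%N -> ~ is_design (support_blocks C n./2) n./2 s').
Proof.
move=> s0 sk hF [S1 [S2 [h1' h2' hne]]].
have nz : forall S : {set 'I_n}, (0 < #|S|)%N -> S != set0.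
  by move=> S; rewrite card_gt0.
split.
  split => //. exists ((#|C| %/ 2 ^ s).-1) => S hS.
  have Sn0 : S != set0 by apply: nz; rewrite hS.
  have := cnt_F Sn0; rewrite /cnt => e.
  by rewrite -(hF S hS) mulnK ?expn_gt0 // -e.
move=> s' hs' hd.
have [_ [lam hl]] := design_downn blocks_size hs' hd.
move: hne; rewrite -(cnt_F (nz _ _)) ?h1' // -(cnt_F (nz _ _)) ?h2' //.
by rewrite /cnt !hl // eqxx.
Qed.

End Finish.

Section Main.
Local Open Scope ring_scope.
Variable n : nat.
Implicit Types (c y : word n).
Variable C : {set word n}.
Hypothesis hC : linear_code C.
Hypothesis h1 : all_ones n \in C.
Variables (t u0 : nat).
Hypothesis hmin : forall y, y \in dual C -> y != 0 -> (t.+1 <= wt y)%N.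
Variable y0 : word n.
Hypothesis y0d : y0 \in dual C.
Hypothesis y0w : wt y0 = t.+1.
Hypothesis hu : forall c, c \in C -> (0 < wt c)%N -> (wt c <= n - t)%N -> wt c = u0.
Hypothesis hu_ex : exists2 c, c \in C & (0 < wt c)%N && (wt c <= n - t)%N.

Definition zero := fun _ : 'I_n => (0 : 'F_2).

Lemma wt_le c : (wt c <= n)%N.
Proof. rewrite /wt; apply: leq_trans (max_card _) _; by rewrite card_ord. Qed.

Lemma strength (S : {set 'I_n}) : (#|S| <= t)%N ->
  forall y, y \in dual C -> supp y \subset S -> y = 0.
Proof.
move=> hS y yd ys. apply/eqP; apply: contraT => yn0.
have := hmin yd yn0. rewrite /wt => h.
have := subset_leq_card ys. move=> h2. have := leq_trans h (leq_trans h2 hS).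
by rewrite ltnn.
Qed.

Lemma fiberS (S : {set 'I_n}) : (#|S| <= t)%N -> forall p, (#|F C S p| * 2 ^ #|S|)%N = #|C|.
Proof. move=> hS p. apply: (fiber hC) => //. exact: strength. Qed.

Lemma C_gt0 : (0 < #|C|)%N.
Proof. by apply/card_gt0P; exists 0; exact: lc0. Qed.

Lemma basis (S : {set 'I_n}) : (#|S| <= t)%N ->
  exists ci : 'I_n -> word n, (forall i, ci i \in C) /\ (forall i j, j \in S -> ci i 0 j = (i == j)%:R).
Proof.
move=> hS.
pose delta (i : 'I_n) := fun j : 'I_n => ((i == j)%:R : 'F_2).
exists (fun i => odflt 0 [pick c in F C S (delta i)]).
have ciP : forall i, odflt 0 [pick c in F C S (delta i)] \in F C S (delta i).
  move=> i; case: pickP => //= h.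
  have h0 : #|F C S (delta i)| = 0%N by apply: eq_card0.
  by move: C_gt0; rewrite -(fiberS hS (delta i)) h0.
split.
  by move=> i; have := ciP i; rewrite inE => /andP[].
by move=> i j jS; have := ciP i; rewrite inE => /andP[_ /forall_inP h]; apply/eqP/h.
Qed.

Lemma sum_ones (A : {set 'I_n}) : \sum_(i in A) (all_ones n) 0 i = #|A|%:R.
Proof. rewrite -sum_f2_card. apply: eq_bigr => i _. by rewrite mxE. Qed.

Lemma dual_even y : y \in dual C -> ~~ odd (wt y).
Proof.
move=> /dualP yd. have := yd _ h1. rewrite {1}(word_supp y) dotp_ind sum_ones f2_nat.
by rewrite /wt; case: (odd _).
Qed.

Lemma sum_bool_cardT (T : finType) (P : pred T) :
  (\sum_x (P x : nat) = #|[set x | P x]|)%N.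
Proof.
rewrite -sum1_card [RHS]big_mkcond /=. apply: eq_bigr => x _.
by rewrite !inE; case: (P x).
Qed.

Definition Act (S : {set 'I_n}) := [set x | [exists c in F C S zero, c 0%R x == 1]].

Lemma key (S : {set 'I_n}) : #|S| = t ->
  (#|Act S| * #|F C S zero| = 2 * ((#|F C S zero| - 1) * u0))%N.
Proof.
move=> hS. set CS := F C S zero. set M := #|CS|.
have CS0 : forall c, c \in CS -> forall j, j \in S -> c 0 j = 0.
  by move=> c; rewrite inE => /andP[_ /forall_inP h] j jS; apply/eqP/h.
have CSC : forall c, c \in CS -> c \in C by move=> c; rewrite inE => /andP[].
have CSadd : forall c c', c \in CS -> c' \in CS -> c + c' \in CS.
  move=> c c' cC c'C; rewrite inE lcD ?CSC //=.
  by apply/forall_inP => j jS; rewrite mxE !CS0 // addr0.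
have zCS : 0 \in CS.
  by rewrite inE lc0 //=; apply/forall_inP => j _; rewrite mxE.
have wtCS : forall c, c \in CS -> c != 0 -> wt c = u0.
  move=> c cCS cn0. apply: hu (CSC _ cCS) _ _; first by rewrite lt0n wt0.
  have sub : supp c \subset ~: S.
    apply/subsetP => i; rewrite /supp !inE; apply: contra => iS. by rewrite CS0 // eqxx.
  by have := subset_leq_card sub; rewrite [#|~: S|]cardsCs setCK card_ord hS.
have sum1 : (\sum_(c in CS) wt c = (M - 1) * u0)%N.
  rewrite (bigD1 0) //=.
  have -> : wt (0 : word n) = 0%N by apply/eqP; rewrite wt0.
  rewrite add0n (eq_bigr (fun _ => u0)); last by move=> c /andP[cCS cn0]; exact: wtCS.
  rewrite (eq_bigl (fun c => c \in CS :\ 0)); last by move=> c; rewrite !inE andbC.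
  by rewrite sum_nat_const /M (cardsD1 0 CS) zCS add1n subn1.
have ewt : forall c, wt c = (\sum_x (c 0%R x == 1%R : nat))%N.
  move=> c; rewrite /wt -sum1_card big_mkcond /=. apply: eq_bigr => x _.
  by rewrite /supp inE f2_neq0; case: (_ == _).
have sum2 : (\sum_(c in CS) wt c = \sum_x #|[set c in CS | c 0%R x == 1%R]|)%N.
  rewrite (eq_bigr _ (fun c _ => ewt c)) exchange_big /=.
  by apply: eq_bigr => x _; rewrite sum_bool_card.
have sum3 : forall x, (2 * #|[set c in CS | c 0%R x == 1%R]| = (x \in Act S) * M)%N.
  move=> x; case: (boolP (x \in Act S)) => xA.
    move: (xA); rewrite inE => /exists_inP [c0 c0CS /eqP c0x].
    rewrite mul1n; symmetry; apply: (@half _ CS c0) => //.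
    by move=> c cCS; exact: CSadd.
  rewrite mul0n; apply/eqP; rewrite muln_eq0 cards_eq0; apply/orP; right.
  apply/eqP/setP => c; rewrite [in LHS]inE [in RHS]inE; apply/negP => /andP[cCS cx].
  by move/negP: xA; apply; rewrite inE; apply/exists_inP; exists c.
rewrite -sum1 sum2 big_distrr /= (eq_bigr _ (fun x _ => sum3 x)) -big_distrl /=.
by rewrite sum_bool_cardT; congr (_ * _)%N; apply: eq_card => x; rewrite inE.
Qed.

Lemma steiner (S : {set 'I_n}) : #|S| = t ->
  exists x : 'I_n, x \notin S /\ exists2 y, y \in dual C & supp y = x |: S.
Proof.
move=> hS.
have [x0 x0y] : exists x0 : 'I_n, x0 \in supp y0.
  by apply/set0Pn; rewrite -card_gt0 -/(wt y0) y0w.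
set S0 := supp y0 :\ x0.
have hS0 : #|S0| = t by move: y0w; rewrite /wt (cardsD1 x0) x0y add1n => -[].
have p2 : (0 < 2 ^ t)%N by rewrite expn_gt0.
have fS := fiberS (eq_leq hS) zero; rewrite hS in fS.
have fS0 := fiberS (eq_leq hS0) zero; rewrite hS0 in fS0.
have M_eq : #|F C S zero| = #|F C S0 zero|.
  by apply/eqP; rewrite -(eqn_pmul2r p2) fS fS0.
have Mpos : (0 < #|F C S zero|)%N.
  by move: C_gt0; rewrite -fS muln_gt0 => /andP[].
have Act_eq : #|Act S| = #|Act S0|.
  by apply/eqP; rewrite -(eqn_pmul2r Mpos) key // [in X in _ == X]M_eq key // M_eq.
have A0 : (#|Act S0| < #|~: S0|)%N.
  apply: proper_card; apply/properP; split.
    apply/subsetP => x; rewrite inE in_setC => /exists_inP [c cF /eqP cx].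
    apply/negP => xS0; move: cF; rewrite inE => /andP[_ /forall_inP h].
    by move: (h x xS0); rewrite cx /zero (negbTE f2_10).
  exists x0; first by rewrite !inE eqxx.
  rewrite inE; apply/negP => /exists_inP [c cF /eqP cx].
  move: cF; rewrite inE => /andP[cC /forall_inP h].
  move/dualP: y0d => /(_ c cC). rewrite (word_supp y0) dotp_ind (bigD1 x0) //= big1.
    by rewrite addr0 cx => /eqP; rewrite (negbTE f2_10).
  move=> i /andP[iy ix]. apply/eqP; apply: h. by rewrite /S0 in_setD1 ix iy.
have : ~~ (~: S \subset Act S).
  apply/negP => sub; have := subset_leq_card sub.
  rewrite Act_eq; move: A0; rewrite [#|~: S0|]cardsCs [#|~: S|]cardsCs !setCK hS hS0.
  by move=> a b; have := leq_ltn_trans b a; rewrite ltnn.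
case/subsetPn => x; rewrite inE => xS xA.
have [ci [ciC ciE]] := basis (eq_leq hS).
have hx : forall c, c \in C -> (forall j, j \in S -> c 0 j = 0) -> c 0 x = 0.
  move=> c cC hc.
  case: (f2_cases (c 0 x)) => // c1. exfalso; move/negP: xA; apply.
  rewrite inE; apply/exists_inP; exists c; last by rewrite c1.
  by rewrite inE cC /=; apply/forall_inP => j jS; rewrite hc.
have [y [yd yx ys]] := construct hC xS ciC ciE hx.
exists x; split => //; exists y => //.
apply/eqP; rewrite eqEcard ys /= cardsU1 (negbTE xS) hS add1n.
apply: hmin yd _. by apply/eqP => y0'; move: yx; rewrite y0' mxE => /eqP; rewrite eq_sym (negbTE f2_10).
Qed.

Lemma supp_eqT c : wt c = n -> supp c = setT.
Proof. move=> h; apply/eqP; rewrite eqEcard subsetT cardsT card_ord /=. by rewrite -/(wt c) h. Qed.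

Lemma wt_lt c : c != all_ones n -> (wt c < n)%N.
Proof.
move=> c1; rewrite ltn_neqAle wt_le andbT; apply: contra c1 => /eqP h.
by apply/eqP/supp_inj; rewrite supp1 supp_eqT.
Qed.

Lemma supp_compl c : supp (all_ones n + c) = ~: supp c.
Proof. apply/setP => i; by rewrite supp_add supp1 !inE. Qed.

Lemma wt_compl c : wt (all_ones n + c) = (n - wt c)%N.
Proof. by rewrite /wt supp_compl cardsCs setCK card_ord. Qed.

Lemma wt_gt0 c : (0 < wt c)%N = (c != 0).
Proof. by rewrite lt0n wt0. Qed.

Lemma no_t2 : t = 2%N -> False.
Proof. move=> t2; have := dual_even y0d; by rewrite y0w t2. Qed.

Lemma card_le4 (a b c d : 'I_n) : (#|[set a; b; c; d]| <= 4)%N.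
Proof.
have h : forall (A : {set 'I_n}) x, (#|A :|: [set x]| <= #|A|.+1)%N.
  by move=> A x; apply: leq_trans (leq_card_setU _ _) _; rewrite cards1 addn1.
apply: leq_trans (h _ _) _; rewrite ltnS; apply: leq_trans (h _ _) _; rewrite ltnS.
by apply: leq_trans (leq_card_setU _ _) _; rewrite !cards1.
Qed.

Lemma no_t4 : (4 <= t)%N -> False.
Proof.
move=> t4.
have wy := wt_le y0; rewrite y0w in wy.
case: (ltnP t.+1 n) => hn; last first.
  have nt : n = t.+1 by apply/eqP; rewrite eqn_leq hn wy.
  have sT : supp y0 = setT by apply: supp_eqT; rewrite y0w nt.
  case: hu_ex => c cC /andP[c0 ct].
  have wc : wt c = 1%N by apply/eqP; rewrite eqn_leq c0 andbT; apply: leq_trans ct _; rewrite leq_subLR addn1.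
  move/dualP: y0d => /(_ c cC). rewrite dotpC (word_supp c) dotp_ind.
  rewrite (eq_bigr (fun _ => 1)); last by move=> i _; rewrite entry_supp sT inE.
  by rewrite sum_f2_card -/(wt c) wc => /eqP; rewrite (negbTE f2_10).
have [p py] : exists p : 'I_n, p \in supp y0.
  by apply/set0Pn; rewrite -card_gt0 -/(wt y0) y0w.
have hSp : #|supp y0 :\ p| = t.
  by move: y0w; rewrite /wt (cardsD1 p) py add1n => -[].
have [q qy] : exists q : 'I_n, q \in supp y0 :\ p.
  by apply/set0Pn; rewrite -card_gt0 hSp; apply: leq_trans t4.
set X := supp y0 :\ p :\ q.
have hX : #|X| = t.-1.
  by move: hSp; rewrite (cardsD1 q) qy add1n => <-.
have [p' p'y] : exists p' : 'I_n, p' \in ~: supp y0.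
  apply/set0Pn; rewrite -card_gt0 cardsCs setCK card_ord -/(wt y0) y0w.
  by rewrite subn_gt0.
have p'X : p' \notin X.
  by rewrite /X !inE; move: p'y; rewrite !inE => /negbTE ->; rewrite !andbF.
have hS' : #|p' |: X| = t by rewrite cardsU1 p'X hX add1n prednK //; apply: leq_trans t4.
have [s' [_ [y2 y2d y2s]]] := steiner hS'.
set z := y0 + y2.
have zd : z \in dual C by apply: dualD.
have zn0 : z != 0.
  apply/negP => /eqP z0. have : p' \in supp z.
    by rewrite supp_add y2s !inE eqxx orbT; move: p'y; rewrite !inE => /negbTE ->.
  by rewrite z0 supp0 inE.
have sub : supp z \subset [set p; q; s'; p'].
  apply/subsetP => i; rewrite supp_add y2s !inE.
  case: (eqVneq i p) => //= ip; case: (eqVneq i q) => //= iq.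
  case: (eqVneq i s') => //= is'; case: (eqVneq i p') => //= ip'.
  by case: (y0 0 i != 0).
have := leq_trans (hmin zd zn0) (leq_trans (subset_leq_card sub) (card_le4 _ _ _ _)).
by rewrite ltnS => h; have := leq_trans t4 h.
Qed.

Lemma weights1 : t = 1%N -> forall c, c \in C -> c != 0 -> c != all_ones n -> (wt c).*2 = n.
Proof.
move=> t1 c cC c0 c1.
have hlt := wt_lt c1. have hgt : (0 < wt c)%N by rewrite wt_gt0.
have e1 : wt c = u0 by apply: hu => //; rewrite t1; lia.
have e2 : wt (all_ones n + c) = u0.
  apply: hu; first exact: lcD.
    by rewrite wt_compl; lia.
  by rewrite wt_compl t1; lia.
move: e2; rewrite wt_compl -e1 -addnn. lia.
Qed.

Lemma f2_eq_add (a b : 'F_2) : a + b = 0 -> a = b.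
Proof.
by case: (f2_cases a) => ->; case: (f2_cases b) => -> //; rewrite ?add0r ?addr0 => h; move: f2_10; rewrite h eqxx.
Qed.

Lemma sum_set2 (f : 'I_n -> 'F_2) (a b : 'I_n) : a != b -> \sum_(k in a |: [set b]) f k = f a + f b.
Proof. move=> ab. by rewrite big_setU1 ?inE //= big_set1. Qed.

Lemma weights3 : t = 3%N -> forall c, c \in C -> c != 0 -> c != all_ones n -> (wt c).*2 = n.
Proof.
move=> t3 c cC c0 c1.
have [i ic] : exists i : 'I_n, i \in supp c.
  by apply/set0Pn; rewrite -card_gt0 -/(wt c) wt_gt0.
have [j jc] : exists j : 'I_n, j \in ~: supp c.
  apply/set0Pn; rewrite -card_gt0 cardsCs setCK card_ord -/(wt c).
  by have := wt_lt c1; lia.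
have ci1 : c 0 i = 1 by rewrite entry_supp ic.
have cj0 : c 0 j = 0 by rewrite entry_supp; move: jc; rewrite inE => /negbTE ->.
have ij : i != j by apply/eqP => e; move: jc; rewrite -e inE ic.
have hphi : forall l : 'I_n, exists x : 'I_n, [forall c' in C, c' 0%R x == c' 0%R l + c' 0%R i + c' 0%R j].
  move=> l. case: (eqVneq l i) => [->|li].
    by exists j; apply/forall_inP => c' _; rewrite f2_add_self add0r.
  case: (eqVneq l j) => [->|lj].
    by exists i; apply/forall_inP => c' _; rewrite addrAC f2_add_self add0r.
  set S := l |: (i |: [set j]).
  have hS : #|S| = t.
    rewrite t3 /S !cardsU1 cards1 !inE (negbTE li) (negbTE lj) (negbTE ij). by [].
  have [x [xS [y yd ys]]] := steiner hS.
  exists x; apply/forall_inP => c' c'C.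
  move/dualP: yd => /(_ c' c'C). rewrite (word_supp y) dotp_ind ys big_setU1 //= /S.
  rewrite big_setU1 /=; last by rewrite !inE negb_or li lj.
  rewrite sum_set2 // => h. apply/eqP/f2_eq_add. rewrite -h.
  by rewrite !addrA.
pose phi (l : 'I_n) := odflt l [pick x | [forall c' in C, c' 0%R x == c' 0%R l + c' 0%R i + c' 0%R j]].
have phiP : forall l c', c' \in C -> c' 0 (phi l) = c' 0 l + c' 0 i + c' 0 j.
  move=> l c' c'C; rewrite /phi; case: pickP => [x /forall_inP h /=|h]; first exact/eqP/h.
  by have [x hx] := hphi l; move: (h x); rewrite hx.
have phi_inj : injective phi.
  move=> l1 l2 e. apply/eqP; apply: contraT => ne.
  set y := ind (l1 |: [set l2]).
  have yd : y \in dual C.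
    apply/dualP => c' c'C. rewrite dotp_ind sum_set2 //.
    have := phiP l1 c' c'C; rewrite e phiP // => /addIr /addIr ->.
    exact: f2_add_self.
  have yn0 : y != 0.
    apply/eqP => y0'. have : l1 \in supp y by rewrite supp_ind !inE eqxx.
    by rewrite y0' supp0 inE.
  have := hmin yd yn0. by rewrite /wt supp_ind cardsU1 cards1 !inE ne t3.
have phic : forall l, c 0 (phi l) = c 0 l + 1 by move=> l; rewrite phiP // ci1 cj0 addr0.
have s1 : phi @: supp c \subset ~: supp c.
  apply/subsetP => x /imsetP [l lc ->]. rewrite !inE phic.
  by move: lc; rewrite inE f2_neq0 => /eqP ->; rewrite f2_11 eqxx.
have s2 : phi @: (~: supp c) \subset supp c.
  apply/subsetP => x /imsetP [l lc ->]. rewrite !inE phic.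
  by move: lc; rewrite !inE negbK => /eqP ->; rewrite add0r.
have := subset_leq_card s1; have := subset_leq_card s2.
rewrite !card_imset // [#|~: supp c|]cardsCs setCK card_ord -/(wt c) => a b.
have := wt_le c. lia.
Qed.


Lemma fiber_y0 : (#|F C (supp y0) (@one n)| * 2 ^ t)%N = #|C|.
Proof.
have [a ay] : exists a : 'I_n, a \in supp y0.
  by apply/set0Pn; rewrite -card_gt0 -/(wt y0) y0w.
have hS' : #|supp y0 :\ a| = t.
  by move: y0w; rewrite /wt (cardsD1 a) ay add1n => -[].
have todd : odd t by have := dual_even y0d; rewrite y0w /=; case: (odd t).
have -> : F C (supp y0) (@one n) = F C (supp y0 :\ a) (@one n).
  apply/setP => c; rewrite !inE; case cC: (c \in C) => //=.
  apply/forall_inP/forall_inP => h i; first by rewrite inE => /andP[_ iy]; apply: h.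
  move=> iy; case: (eqVneq i a) => [->|ia]; last by apply: h; rewrite in_setD1 ia iy.
  move/dualP: y0d => /(_ c cC). rewrite (word_supp y0) dotp_ind (big_setD1 a) //=.
  rewrite (eq_bigr (fun _ => 1)); last by move=> k kS; apply/eqP/h.
  rewrite sum_f2_card hS' f2_nat todd => /f2_eq_add ->. by [].
by rewrite -[X in (2 ^ X)%N]hS' fiberS // hS'.
Qed.

Lemma fiber_S2 (S2 : {set 'I_n}) : #|S2| = t.+1 ->
  (forall y, y \in dual C -> supp y != S2) -> (#|F C S2 (@one n)| * 2 ^ t.+1)%N = #|C|.
Proof.
move=> hS hne. rewrite -hS. apply: (fiber hC) => // y yd ys.
apply/eqP; apply: contraT => yn0. have := hmin yd yn0.
have := hne y yd. rewrite eqEcard ys /= -/(wt y) hS. by move/negbTE => ->.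
Qed.

Lemma neg_wit (S2 : {set 'I_n}) : #|S2| = t.+1 ->
  (forall y, y \in dual C -> supp y != S2) ->
  exists S1 S3 : {set 'I_n}, [/\ #|S1| = t.+1, #|S3| = t.+1 & #|F C S1 (@one n)| != #|F C S3 (@one n)|].
Proof.
move=> hS hne. exists (supp y0), S2; split => //.
have f1 := fiber_y0. have f2 := fiber_S2 hS hne.
have pos : (0 < #|F C S2 (@one n)|)%N by move: C_gt0; rewrite -f2 muln_gt0 => /andP[].
apply/eqP => e. move: f1; rewrite -f2 e expnS => h.
have p2 : (0 < 2 ^ t)%N by rewrite expn_gt0.
move: h pos p2. set X := #|F C S2 _|. set P := (2 ^ t)%N. nia.
Qed.

Definition concl := exists s : nat, (s = 1 \/ s = 3)%N /\
    is_design (support_blocks C n./2) n./2 s /\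
    (forall s' : nat, (s < s')%N -> ~ is_design (support_blocks C n./2) n./2 s').

Lemma main_t1 : t = 1%N -> concl.
Proof.
move=> t1. case: hu_ex => c0 c0C /andP[c0p c0le].
have hn : (0 < n)%N by have := wt_le c0; lia.
have c0n0 : c0 != 0 by rewrite -wt_gt0.
have c0n1 : c0 != all_ones n.
  apply/eqP => e; move: c0le; rewrite e /wt supp1 cardsT card_ord t1; lia.
have hW := weights1 t1.
have n2 := hW c0 c0C c0n0 c0n1.
exists 1%N; split; first by left.
apply: (finish h1 hW hn) => //.
- by rewrite -n2 doubleK.
- by move=> S hS; rewrite -[X in (2 ^ X)%N]hS; apply: fiberS; rewrite hS t1.
have [a ay] : exists a : 'I_n, a \in supp y0.
  by apply/set0Pn; rewrite -card_gt0 -/(wt y0) y0w.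
have [l hl] : exists l : 'I_n, c0 0 l != c0 0 a.
  case: (f2_cases (c0 0 a)) => ->.
    have [l ls] : exists l : 'I_n, l \in supp c0 by apply/set0Pn; rewrite -card_gt0.
    by exists l; rewrite entry_supp ls.
  have [l ls] : exists l : 'I_n, l \in ~: supp c0.
    apply/set0Pn; rewrite -card_gt0 cardsCs setCK card_ord -/(wt c0).
    by have := wt_lt c0n1; lia.
  by exists l; move: ls; rewrite inE entry_supp => /negbTE ->; rewrite eq_sym f2_10.
have la : a != l by apply: contraNneq hl => ->.
have hS2 : #|a |: [set l]| = t.+1 by rewrite cardsU1 cards1 inE la t1.
have hne : forall y, y \in dual C -> supp y != a |: [set l].
  move=> y /dualP yd; apply/negP => /eqP ys. have := yd c0 c0C.
  rewrite (word_supp y) dotp_ind ys sum_set2 // => /f2_eq_add e.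
  by move: hl; rewrite e eqxx.
by have := neg_wit hS2 hne; rewrite t1.
Qed.

Lemma main_t3 : t = 3%N -> concl.
Proof.
move=> t3. case: hu_ex => c0 c0C /andP[c0p c0le].
have hn : (0 < n)%N by have := wt_le c0; lia.
have c0n0 : c0 != 0 by rewrite -wt_gt0.
have c0n1 : c0 != all_ones n.
  apply/eqP => e; move: c0le; rewrite e /wt supp1 cardsT card_ord t3; lia.
have hW := weights3 t3.
have n2 := hW c0 c0C c0n0 c0n1.
have w3 : (3 <= wt c0)%N by move: c0le n2; rewrite t3 -addnn; lia.
exists 3%N; split; first by right.
apply: (finish h1 hW hn) => //.
- by rewrite -n2 doubleK.
- by move=> S hS; rewrite -[X in (2 ^ X)%N]hS; apply: fiberS; rewrite hS t3.
have [a ay] : exists a : 'I_n, a \in supp y0.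
  by apply/set0Pn; rewrite -card_gt0 -/(wt y0) y0w.
have [l ly] : exists l : 'I_n, l \in ~: supp y0.
  apply/set0Pn; rewrite -card_gt0 cardsCs setCK card_ord -/(wt y0) y0w t3.
  by move: w3 n2; rewrite -addnn; lia.
have hS' : #|supp y0 :\ a| = t.
  by move: y0w; rewrite /wt (cardsD1 a) ay add1n => -[].
have lS : l \notin supp y0 :\ a by move: ly; rewrite !inE => /negbTE ->; rewrite andbF.
have hS2 : #|l |: (supp y0 :\ a)| = t.+1 by rewrite cardsU1 lS hS'.
have hne : forall y, y \in dual C -> supp y != l |: (supp y0 :\ a).
  move=> y yd; apply/negP => /eqP ys.
  set z := y + y0.
  have zd : z \in dual C by apply: dualD.
  have zn0 : z != 0.
    apply/negP => /eqP z0. have : l \in supp z.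
      by rewrite supp_add ys !inE eqxx /=; move: ly; rewrite !inE => /negbTE ->.
    by rewrite z0 supp0 inE.
  have sub : supp z \subset a |: [set l].
    apply/subsetP => i; rewrite supp_add ys !inE.
    case: (eqVneq i a) => //= ia; case: (eqVneq i l) => //= il.
    by case: (y0 0 i != 0).
  have := leq_trans (hmin zd zn0) (subset_leq_card sub).
  rewrite cardsU1 cards1 t3. by case: (a \in [set l]).
by have := neg_wit hS2 hne; rewrite t3.
Qed.

End Main.

Unset Implicit Arguments.

Theorem lemma3p1 (n : nat) (C : {set word n}) (dperp t : nat) :
  linear_code C ->
  all_ones n \in C ->
  min_dist (dual C) dperp ->
  (0 < t)%N ->
  (dperp - t)%N = 1%N ->
  #|[set u : 'I_n.+1 | (0 < u)%N && (u <= n - t)%N && (C_u C u != set0)]| = 1%N ->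
  exists s : nat, (s = 1 \/ s = 3)%N /\
    is_design (support_blocks C n./2) n./2 s /\
    (forall s' : nat, (s < s')%N -> ~ is_design (support_blocks C n./2) n./2 s').
Proof.
move=> hC h1 [[y0 y0d /andP[y0n0 /eqP y0w]] hmin0] ht hdt hU.
have dp : dperp = t.+1 by lia.
rewrite dp in y0w hmin0.
set A := [set u : 'I_n.+1 | _] in hU.
have [u0 Au0] : exists u0, A = [set u0] by apply/cards1P; rewrite hU.
have hu : forall c, c \in C -> (0 < wt c)%N -> (wt c <= n - t)%N -> wt c = u0.
  move=> c cC c0 ct.
  have wn : (wt c < n.+1)%N by rewrite ltnS wt_le.
  have : (inord (wt c) : 'I_n.+1) \in A.
    rewrite inE inordK // c0 ct /=. apply/set0Pn; exists c. by rewrite inE cC eqxx.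
  by rewrite Au0 inE => /eqP <-; rewrite inordK.
have hu_ex : exists2 c, c \in C & (0 < wt c)%N && (wt c <= n - t)%N.
  have : u0 \in A by rewrite Au0 inE.
  rewrite inE => /andP[/andP[u0p u0t] /set0Pn [c]]; rewrite inE => /andP[cC /eqP cw].
  by exists c => //; rewrite cw u0p u0t.
have hmin : forall y, y \in dual C -> y != 0 -> (t.+1 <= wt y)%N by [].
have : (t = 1 \/ t = 2 \/ t = 3 \/ 4 <= t)%N by lia.
case=> [t1|[t2|[t3|t4]]].
- exact: (main_t1 hC h1 hmin y0d y0w hu hu_ex t1).
- by case: (no_t2 h1 y0d y0w t2).
- exact: (main_t3 hC h1 hmin y0d y0w hu hu_ex t3).
- by case: (no_t4 hC hmin y0d y0w hu hu_ex t4).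
Qed.
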